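(* There exists no rectifying curve in $\mathbb{E}^n$ all of whose curvatures $\kappa_1,\dots,\kappa_{n-1}$ are non-zero constants.
   Context: For an arclength parameterized curve $\alpha$ in $\mathbb{E}^n$ that is $n$ times continuously differentiable, the Frenet frame $T,N,B_1,\dots,B_{n-2}$ is orthonormal and satisfies $T'=\kappa_1N$, $N'=-\kappa_1T+\kappa_2B_1$, $B_1'=-\kappa_2N+\kappa_3B_2$, $B_i'=-\kappa_{i+1}B_{i-1}+\kappa_{i+2}B_{i+1}$ for $i\in\{2,\dots,n-3\}$, $B_{n-2}'=-\kappa_{n-1}B_{n-3}$, where $\kappa_1,\dots,\kappa_{n-1}$ are the curvatures and $\kappa_1,\dots,\kappa_{n-2}>0$. A curve $\alpha$ is a rectifying curve if there is a fixed point $p$ such that for all $s$, $\langle\alpha(s)-p,N(s)\rangle=0$. *)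

(* Defs.v *)
From HB Require Import structures.
From mathcomp Require Import all_boot all_order all_algebra.
From mathcomp Require Import all_classical all_reals all_analysis.
Set Implicit Arguments. Unset Strict Implicit. Unset Printing Implicit Defensive.
Import Order.TTheory GRing.Theory Num.Theory numFieldNormedType.Exports.
Local Open Scope classical_set_scope.
Local Open Scope ring_scope.

Section Defs.
Variable R : realType.

Definition dotE (n : nat) (x y : 'I_n -> R) : R := \sum_(j < n) x j * y j.

Definition open_itv (a b : \bar R) : set R := [set x | (a < x%:E)%E /\ (x%:E < b)%E].

Definition Ck_on (k : nat) (I : set R) (f : R -> R) : Prop :=
  (forall m, (m < k)%N -> forall x, I x -> derivable (derive1n m f) x 1) /\
  (forall x, I x -> {for x, continuous (fun y : R => derive1n k f y : R)}).

(* A curve alpha : I -> E^n (coordinates alpha j), n-times continuously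
   differentiable and parameterized by arclength, with Frenet frame
   E 0 = T, E 1 = N, E (k+1) = B_k (1 <= k <= n-2) and curvatures
   kappa 1, ..., kappa (n-1) (constant real numbers here, indices nat). *)
Definition arclength_Cn_curve (n : nat) (I : set R) (alpha : 'I_n -> R -> R) :=
  (forall j, Ck_on n I (alpha j)) /\
  (forall s, I s -> dotE (fun j => derive1 (alpha j) s)
                         (fun j => derive1 (alpha j) s) = 1).

Definition frenet_frame (n : nat) (I : set R) (alpha : 'I_n -> R -> R)
    (E : nat -> 'I_n -> R -> R) (kappa : nat -> R) : Prop :=
  (forall s, I s -> forall i k, (i < n)%N -> (k < n)%N ->
     dotE (fun j => E i j s) (fun j => E k j s) = (if i == k then 1 else 0)) /\
  (forall s, I s -> forall j, E 0%N j s = derive1 (alpha j) s) /\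
  (forall s, I s -> forall i j, (i < n)%N -> derivable (E i j) s 1 /\
     derive1 (E i j) s =
       (if i == 0%N then 0 else - kappa i * E i.-1 j s) +
       (if (i.+1 < n)%N then kappa i.+1 * E i.+1 j s else 0)) /\
  (forall i, (1 <= i)%N -> (i <= n - 2)%N -> 0 < kappa i).

Definition rectifying (n : nat) (I : set R) (alpha : 'I_n -> R -> R)
    (E : nat -> 'I_n -> R -> R) : Prop :=
  exists p : 'I_n -> R, forall s, I s ->
    dotE (fun j => alpha j s - p j) (fun j => E 1%N j s) = 0.

End Defs.

(* Main.v *)
Require Import Defs.
From HB Require Import structures.
From mathcomp Require Import all_boot all_order all_algebra.
From mathcomp Require Import all_classical all_reals all_analysis.
From mathcomp Require Import lra ring zify.
Import Order.TTheory GRing.Theory Num.Theory numFieldNormedType.Exports.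
Local Open Scope ring_scope.
Section Aux.
Variable R : realType.

Lemma hderiv (n : nat) (I : set R) (alpha : 'I_n -> R -> R)
    (E : nat -> 'I_n -> R -> R) (kappa : nat -> R) (p : 'I_n -> R) :
  arclength_Cn_curve I alpha -> frenet_frame I alpha E kappa ->
  forall i, (i < n)%N -> forall s, I s ->
  let h := fun i s => dotE (fun j => alpha j s - p j) (fun j => E i j s) in
  derivable (h i) s 1 /\
  derive1 (h i) s = (if i == 0%N then 1 else 0) +
    ((if i == 0%N then 0 else - kappa i * h i.-1 s) +
     (if (i.+1 < n)%N then kappa i.+1 * h i.+1 s else 0)).
Proof.
move=> [Ca _] [orth [T0 [fr _]]] i ilt s Is h.
have da : forall j, derivable (alpha j) s 1.
  by move=> j; have [+ _] := Ca j; move=> /(_ 0%N); apply => //; exact: leq_ltn_trans (leq0n _) ilt.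
have hE : h i = \sum_(j < n) (fun x => (alpha j x - p j) * E i j x).
  by rewrite fct_sumE; apply/funext => x.
have dj : forall j, is_derive s (1:R) (fun x => (alpha j x - p j) * E i j x)
     ((alpha j s - p j) * derive1 (E i j) s + E i j s * derive1 (alpha j) s).
  move=> j.
  have d1 : is_derive s (1:R) (fun x => alpha j x - p j) (derive1 (alpha j) s).
    have dA : is_derive s (1:R) (alpha j) ('D_1 (alpha j) s) := derivableP (da j).
    have := is_deriveB dA (is_derive_cst (p j) s (1:R)).
    by rewrite subr0 -derive1E.
  have d2 : is_derive s (1:R) (E i j) (derive1 (E i j) s).
    by rewrite derive1E; apply: derivableP; have [] := fr s Is i j ilt.
  have := is_deriveM d1 d2.
  by [].
have := is_derive_sum dj; rewrite -hE => D.
split; first by case: D.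
rewrite derive1E derive_val.
under eq_bigr => j _ do rewrite (fr s Is i j ilt).2 -T0 //.
rewrite big_split /= addrC; congr (_ + _).
  have := orth s Is i 0%N ilt (leq_ltn_trans (leq0n _) ilt).
  rewrite /dotE eq_sym => <-; apply: eq_bigr => j _; rewrite mulrC //.
rewrite /h /dotE.
case: (i == 0%N); case: (i.+1 < n)%N; rewrite ?add0r ?addr0 ?mulr_sumr -?big_split /=;
  (by apply: eq_bigr => j _; ring) || (by rewrite big1 // => j _; ring).
Qed.
End Aux.
Section Aux2.
Variable R : realType.

Lemma key (n : nat) (I : set R) (h : nat -> R -> R) (k : nat -> R) :
 (3 <= n)%N -> (exists s, I s) -> (forall s, I s -> \forall x \near s, I x) ->
 (forall i, (i < n)%N -> forall s, I s -> derivable (h i) s 1 /\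
  derive1 (h i) s = (if i == 0%N then 1 else 0) +
    ((if i == 0%N then 0 else - k i * h i.-1 s) +
     (if (i.+1 < n)%N then k i.+1 * h i.+1 s else 0))) ->
 (forall s, I s -> h 1%N s = 0) ->
 (forall i, (1 <= i)%N -> (i <= n - 2)%N -> 0 < k i) -> k (n - 1)%N != 0 -> False.
Proof.
move=> n3 [s0 Is0] Iopen F1 h1 kpos kl.
have H0 : forall s, I s -> is_derive s (1:R) (h 0%N) 1.
  move=> s Is; have [d e] := F1 0%N (leq_ltn_trans (leq0n _) n3) s Is.
  apply: DeriveDef => //; rewrite -derive1E e /= h1 //.
  by rewrite (leq_trans _ n3) // mulr0 !addr0.
have D : forall i A B, (forall s, I s -> h i s = A * h 0%N s + B) ->
    forall s, I s -> derive1 (h i) s = A.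
  move=> i A B hA s Is.
  have Hnear : \forall x \near s, h i x = A * h 0%N x + B.
    by apply: filterS (Iopen s Is) => x /hA.
  rewrite derive1E (near_eq_derive _ Hnear).
  have HA : is_derive s (1:R) (cst A) 0 by apply: is_derive_cst.
  have HB : is_derive s (1:R) (cst B) 0 by apply: is_derive_cst.
  have H := is_deriveD (is_deriveM HA (H0 s Is)) HB.
  rewrite (@derive_val _ _ _ _ _ _ _ H) /=.
  by rewrite scaler0 !addr0; exact: mulr1.
pose aff i A B := forall s, I s -> h i s = A * h 0%N s + B.
have step : forall i A0 B0 A1 B1, (i.+2 < n)%N -> k i.+2 != 0 ->
    aff i A0 B0 -> aff i.+1 A1 B1 ->
    aff i.+2 (k i.+1 * A0 / k i.+2) ((A1 + k i.+1 * B0) / k i.+2).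
  move=> i A0 B0 A1 B1 lt k2n0 a0 a1 s Is.
  have [_ e] := F1 i.+1 (ltnW lt) s Is.
  rewrite /= lt (D _ _ _ a1 s Is) (a0 s Is) in e.
  have e' : k i.+2 * h i.+2 s = A1 + k i.+1 * (A0 * h 0%N s + B0).
    by rewrite e; ring.
  rewrite -[h i.+2 s](mulKf k2n0) e'; field; exact: k2n0.
pose P i := exists A B, aff i A B /\ (if odd i then A = 0 /\ 0 <= B else 0 < A).
have ind : forall i, (i.+1 <= n-2)%N -> P i /\ P i.+1.
  elim=> [_|i IH hi].
    split.
      by exists 1, 0; split; [move=> s _; rewrite mul1r addr0 | exact: ltr01].
    exists 0, 0; split; last by split.
    by move=> s Is; rewrite h1 // mul0r addr0.
  have [[A0 [B0 [e0 c0]]] [A1 [B1 [e1 c1]]]] := IH (ltnW hi).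
  split; first by exists A1, B1.
  have kp1 : 0 < k i.+1 by apply: kpos => //; lia.
  have kp2 : 0 < k i.+2 by apply: kpos => //; lia.
  exists (k i.+1 * A0 / k i.+2), ((A1 + k i.+1 * B0) / k i.+2); split.
    by apply: (step i A0 B0 A1 B1 _ _ e0 e1); [lia | rewrite gt_eqF].
  move: c0 c1; rewrite /= negbK; case: (odd i) => /= [[-> B0p] A1p | A0p _].
    split; first by rewrite mulr0 mul0r.
    by apply: divr_ge0; [apply: addr_ge0; [exact: ltW | exact: mulr_ge0 (ltW _) _] | exact: ltW].
  by rewrite divr_gt0 // mulr_gt0.
have [i ni] : exists i, n = i.+3 by exists (n - 3)%N; lia.
subst n.
have [[A0 [B0 [e0 c0]]] [A1 [B1 [e1 c1]]]] := ind i (leqnn _).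
have k2n0 : k i.+2 != 0 by move: kl; rewrite (_ : (i.+3 - 1 = i.+2)%N) //; lia.
have kp1 : 0 < k i.+1 by apply: kpos => //; lia.
have a2 := step i A0 B0 A1 B1 (ltnSn _) k2n0 e0 e1.
have E2 : forall s, I s -> k i.+1 * A0 / k i.+2 = - k i.+2 * (A1 * h 0%N s + B1).
  move=> s Is; rewrite -(D _ _ _ a2 s Is).
  have [_ e] := F1 i.+2 (ltnSn _) s Is.
  by rewrite e /= ltnn (e1 s Is); ring.
move: c0 c1; rewrite /=; case: (odd i) => /= [_ A1p | A0p [A1z B1p]].
  have cst0 : forall s, I s -> h 0%N s = (- (k i.+1 * A0 / k i.+2 / k i.+2) - B1) / A1.
    move=> s Is; have A1n0 : A1 != 0 by rewrite gt_eqF.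
    have : A1 * h 0%N s = - (k i.+1 * A0 / k i.+2 / k i.+2) - B1.
      rewrite (E2 s Is); field; exact: k2n0.
    by move=> <-; field.
  set C := (- (k i.+1 * A0 / k i.+2 / k i.+2) - B1) / A1 in cst0.
  have Hnear : \forall x \near s0, h 0%N x = cst C x.
    by apply: filterS (Iopen s0 Is0) => x /cst0.
  have [_ d] := H0 s0 Is0.
  rewrite (near_eq_derive _ Hnear) derive_cst in d.
  by move/eqP: d; rewrite eq_sym oner_eq0.
have := E2 s0 Is0; rewrite A1z mul0r add0r => e.
have e' : k i.+1 * A0 = - (k i.+2 ^+ 2 * B1).
  by rewrite -[k i.+1 * A0](divfK k2n0) e; ring.
have := mulr_gt0 kp1 A0p; have := mulr_ge0 (sqr_ge0 (k i.+2)) B1p.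
rewrite e'; lra.
Qed.
End Aux2.
Section Aux3.
Variable R : realType.
Local Open Scope ereal_scope.

Lemma itv_near (a b : \bar R) (s : R) : open_itv a b s ->
  \forall x \near s, open_itv a b x.
Proof.
move=> [ha hb]; near=> x; split; near: x.
- case: a ha => [r| |] /= ha.
  + by rewrite lte_fin in ha; apply: filterS (lt_nbhsr ha) => x; rewrite lte_fin.
  + by [].
  + by apply: nearW => x; rewrite ltNyr.
- case: b hb => [r| |] /= hb.
  + by rewrite lte_fin in hb; apply: filterS (lt_nbhsl hb) => x; rewrite lte_fin.
  + by apply: nearW => x; rewrite ltry.
  + by [].
Unshelve. all: by end_near. Qed.

Lemma itv_ne (a b : \bar R) : a < b -> exists s, open_itv a b s.
Proof.
case: a => [r| |]; case: b => [t| |] //= ab.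
- exists ((r + t) / 2)%R; rewrite /open_itv /= !lte_fin; rewrite lte_fin in ab.
  split; lra.
- by exists (r + 1)%R; rewrite /open_itv /= lte_fin ltry; split => //; lra.
- by exists (t - 1)%R; rewrite /open_itv /= lte_fin ltNyr; split => //; lra.
- by exists 0%R; rewrite /open_itv /= ltNyr ltry.
Qed.
End Aux3.

Theorem theorem4p2 (R : realType) (n : nat) (hn : (3 <= n)%N) :
  ~ exists (a b : \bar R) (alpha : 'I_n -> R -> R)
           (E : nat -> 'I_n -> R -> R) (kappa : nat -> R),
      [/\ (a < b)%E,
          arclength_Cn_curve (open_itv a b) alpha,
          frenet_frame (open_itv a b) alpha E kappa,
          (forall i, (1 <= i)%N -> (i <= n - 1)%N -> kappa i != 0)
        & rectifying (open_itv a b) alpha E].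
Proof.
move=> [a [b [alpha [E [kappa [ab arc fr knz [p rect]]]]]]].
pose h := fun i s => dotE (fun j => alpha j s - p j) (fun j => E i j s).
apply: (@key R n (open_itv a b) h kappa hn (@itv_ne R a b ab) (@itv_near R a b)).
- by move=> i ilt s Is; exact: (@hderiv R n _ alpha E kappa p arc fr i ilt s Is).
- by move=> s Is; exact: rect.
- by have [_ [_ [_ kp]]] := fr.
- by apply: knz; lia.
Qed.
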